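(* Let $\mathbb{F}$ be the countable fan and $\mathsf{2}$ the discrete space $\{\mathtt{0},\mathtt{1}\}$. Let $(h_n)_n$ converge to $h_\infty$ in $\mathsf{2}^{\mathbb{N}\times\mathbb{F}}$. Then for every $k\in\mathbb{N}$ there exists $m\in\mathbb{N}$ such that $h_n(k,a,b)=h_\infty(k,\infty,\infty)$ for all $n\ge m$ (including $n=\infty$), all $a\ge m$ and all $b\in\mathbb{N}$.
   Context: The countable fan $\mathbb{F}$ has underlying set $\mathbb{N}^2\cup\{(\infty,\infty)\}$ and the metric $d((a,b),(\infty,\infty))=2^{-a}$, $d((a,b),(a',b'))=\max\{2^{-a},2^{-a'}\}$ for distinct $(a,b),(a',b')\in\mathbb{N}^2$. $\mathbb{N}$ is discrete. $\mathsf{2}^{\mathbb{N}\times\mathbb{F}}$ is the exponential in the category QCB (quotients of countably based spaces): the set of continuous maps $\mathbb{N}\times\mathbb{F}\to\mathsf{2}$ with the sequentialisation of the compact-open topology. *)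

(* Defs.v *)
From Stdlib Require Import Reals List.
Open Scope R_scope.

(** The countable fan F: points (a,b) in N^2 together with (oo,oo). *)
Inductive fan : Type :=
| Pt : nat -> nat -> fan
| Inf : fan.

Definition fan_dist (x y : fan) : R :=
  match x, y with
  | Inf, Inf => 0
  | Pt a _, Inf => (/2) ^ a
  | Inf, Pt a _ => (/2) ^ a
  | Pt a b, Pt a' b' =>
      if (Nat.eqb a a' && Nat.eqb b b')%bool then 0 else Rmax ((/2) ^ a) ((/2) ^ a')
  end.

Definition fan_open (U : fan -> Prop) : Prop :=
  forall x, U x -> exists r, 0 < r /\ forall y, fan_dist x y < r -> U y.

(** The space X = N x F (N discrete, product topology). *)
Definition X : Type := (nat * fan)%type.

Definition X_open (U : X -> Prop) : Prop :=
  forall k : nat, fan_open (fun p => U (k, p)).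

Definition X_compact (K : X -> Prop) : Prop :=
  forall (I : Type) (V : I -> X -> Prop),
    (forall i, X_open (V i)) ->
    (forall x, K x -> exists i, V i x) ->
    exists l : list I, forall x, K x -> exists i, In i l /\ V i x.

(** Continuous maps X -> 2 (2 discrete: every subset of 2 is open). *)
Definition X_continuous (h : X -> bool) : Prop :=
  forall V : bool -> Prop, X_open (fun x => V (h x)).

Definition C2 : Type := { h : X -> bool | X_continuous h }.

Definition ev (f : C2) : X -> bool := proj1_sig f.

(** Convergence of sequences in the compact-open topology: a sequence
    converges iff it is eventually in every subbasic open set
    [K,U] = { f | f(K) subset U } (K compact, U open in 2) containing the limit. *)
Definition co_converges (f : nat -> C2) (g : C2) : Prop :=
  forall (K : X -> Prop) (U : bool -> Prop),
    X_compact K ->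
    (forall x, K x -> U (ev g x)) ->
    exists N : nat, forall n, (N <= n)%nat -> forall x, K x -> U (ev (f n) x).

(** Sequentially open sets of the compact-open topology (= opens of its
    sequentialization). *)
Definition seq_open (W : C2 -> Prop) : Prop :=
  forall (f : nat -> C2) (g : C2), co_converges f g -> W g ->
    exists N : nat, forall n, (N <= n)%nat -> W (f n).

(** Convergence in the QCB exponential 2^(N x F), i.e. in the
    sequentialization of the compact-open topology. *)
Definition exp_converges (f : nat -> C2) (g : C2) : Prop :=
  forall W : C2 -> Prop, seq_open W -> W g ->
    exists N : nat, forall n, (N <= n)%nat -> W (f n).

(* Main.v *)
Require Import Defs.
From Stdlib Require Import Reals List.
From Stdlib Require Import Classical ClassicalEpsilon Lia Lra.

Lemma small_pow (r : R) : 0 < r -> exists M : nat, forall a, (M <= a)%nat -> (/2) ^ a < r.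
Proof.
  intros Hr.
  destruct (pow_lt_1_zero (/2)) with (y := r) as [M HM].
  - rewrite Rabs_right; lra.
  - exact Hr.
  - exists M. intros a Ha. specialize (HM a Ha).
    eapply Rle_lt_trans; [apply Rle_abs|exact HM].
Qed.

Lemma cont_inf (g : C2) (k : nat) : exists m : nat,
  forall a, (m <= a)%nat -> forall b, ev g (k, Pt a b) = ev g (k, Inf).
Proof.
  destruct g as [g Hg]. simpl.
  destruct (Hg (fun c => c = g (k, Inf)) k Inf eq_refl) as [r [Hr Hy]].
  destruct (small_pow r Hr) as [M HM].
  exists M. intros a Ha b. apply Hy. simpl. apply HM; exact Ha.
Qed.

Theorem lemma3p5 (h : nat -> C2) (hinf : C2) :
  exp_converges h hinf ->
  forall k : nat, exists m : nat,
    (forall n, (m <= n)%nat -> forall a, (m <= a)%nat -> forall b,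
        ev (h n) (k, Pt a b) = ev hinf (k, Inf)) /\
    (forall a, (m <= a)%nat -> forall b,
        ev hinf (k, Pt a b) = ev hinf (k, Inf)).
Proof.
  intros Hconv k.
  destruct (cont_inf hinf k) as [m0 Hm0].
  set (c := ev hinf (k, Inf)).
  assert (P1 : exists m1, forall n, (m1 <= n)%nat -> forall a, (m1 <= a)%nat -> forall b,
        ev (h n) (k, Pt a b) = c).
  { apply NNPP; intro Hn.
    assert (Hbad : forall m, exists t : nat * nat * nat,
      (m <= fst (fst t))%nat /\ (m <= snd (fst t))%nat /\ ev (h (fst (fst t))) (k, Pt (snd (fst t)) (snd t)) <> c).
    { intro m. apply NNPP; intro Hm. apply Hn. exists m.
      intros n Hnm a Ha b. apply NNPP; intro Hne. apply Hm.
      exists (n, a, b). simpl. auto. }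
    set (F := fun m => proj1_sig (constructive_indefinite_description _ (Hbad m))).
    assert (HF : forall m, (m <= fst (fst (F m)))%nat /\ (m <= snd (fst (F m)))%nat /\
       ev (h (fst (fst (F m)))) (k, Pt (snd (fst (F m))) (snd (F m))) <> c).
    { intro m. unfold F. destruct (constructive_indefinite_description _ (Hbad m)); simpl; auto. }
    set (pt := fun i => (k, Pt (snd (fst (F (i + m0)%nat))) (snd (F (i + m0)%nat))) : X).
    set (K := fun x : X => x = (k, Inf) \/ exists i, x = pt i).
    set (W := fun g : C2 => forall x, K x -> ev g x = c).
    assert (HK : X_compact K).
    { intros I V HV Hcov.
      destruct (Hcov (k, Inf) (or_introl eq_refl)) as [j0 Hj0].
      destruct (HV j0 k Inf Hj0) as [r [Hr Hy]].
      destruct (small_pow r Hr) as [M HM].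
      assert (Hc : forall i, exists j, V j (pt i)).
      { intro i. apply Hcov. right. exists i. reflexivity. }
      set (cov := fun i => proj1_sig (constructive_indefinite_description _ (Hc i))).
      exists (j0 :: map cov (seq 0 M)).
      intros x [Hx | [i Hx]]; subst x.
      - exists j0. split; [left; reflexivity | exact Hj0].
      - destruct (Compare_dec.le_lt_dec M i) as [HMi | HiM].
        + exists j0. split; [left; reflexivity|]. apply Hy. simpl.
          apply HM. destruct (HF (i + m0)%nat) as [_ [H2 _]]. lia.
        + exists (cov i). split.
          * right. apply in_map. apply in_seq. lia.
          * unfold cov. destruct (constructive_indefinite_description _ (Hc i)); simpl; auto. }
    assert (HW : seq_open W).
    { intros f g Hfg Wg. apply (Hfg K (fun b => b = c) HK Wg). }
    assert (Winf : W hinf).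
    { intros x [Hx | [i Hx]]; subst x.
      - reflexivity.
      - unfold pt. apply Hm0. destruct (HF (i + m0)%nat) as [_ [H2 _]]. lia. }
    destruct (Hconv W HW Winf) as [N HN].
    destruct (HF (N + m0)%nat) as [H1 [H2 H3]].
    apply H3. assert (HNl : (N <= fst (fst (F (N + m0)%nat)))%nat) by lia. apply (HN _ HNl). right. exists N. reflexivity. }
  destruct P1 as [m1 Hm1].
  exists (Nat.max m0 m1). split.
  - intros n Hn a Ha b. apply Hm1; lia.
  - intros a Ha b. apply Hm0; lia.
Qed.
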